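(* For any $n\in\mathbb{N}, l\in\mathbb{Z}, Q\in\mathbb{C}[K^{\pm1},C_1]$, we have $u(n,l,Q)=q^{2nl}K_2^{l}g^nQv_\eta$, where $$g=F_2(1-q^{-2}K_2^{2}K^{-2})+\alpha(1-q^{-2})F_3K^{-1}.$$
   Context: Let $q\in\mathbb{C}$ be nonzero and not a root of unity, and $U=U_q(\mathfrak{sl}_3)$ the algebra generated by $E_1,E_2,F_1,F_2,K_1^{\pm1},K_2^{\pm1}$ with the Jimbo relations. Put $F_3=F_1F_2-qF_2F_1$, $K=K_1K_2^2$, $C_1=F_1E_1+\frac{qK_1+q^{-1}K_1^{-1}}{(q-q^{-1})^2}$. Let $U^+$ be the subalgebra generated by $E_1,E_2$, $\eta:U^+\to\mathbb{C}$ the algebra homomorphism with $\eta(E_1)=\alpha\neq0$, $\eta(E_2)=0$, and $M(\eta)=U\otimes_{U^+}\mathbb{C}v_\eta$ with $xv_\eta=\eta(x)v_\eta$. Write $[k]=\frac{q^k-q^{-k}}{q-q^{-1}}$, $[k]!=[k]\cdots[1]$, $[0]!=1$, $\genfrac{[}{]}{0pt}{}{n}{k}=\frac{[n]!}{[k]![n-k]!}$ for $0\le k\le n$ (0 otherwise). For $n\in\mathbb{Z}_+$, $l\in\mathbb{Z}$, $Q\in\mathbb{C}[K^{\pm1},C_1]$, $u(n,l,Q)=q^{2nl}K_2^l\sum_{k=0}^{n}\sum_{j=0}^{n-k}a_{kj}(n)F_2^{n-k}F_3^kK_2^{2j}K^{-2j-k}Qv_\eta$ with $a_{kj}(n)=(-1)^j\alpha^k(q^2-1)^kq^{j(n-3)}q^{\frac{1}{2}k(2n+2j+k-7)}\genfrac{[}{]}{0pt}{}{n}{k}\genfrac{[}{]}{0pt}{}{n-k}{j}$.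 *)

(* Defs.v *)
From HB Require Import structures.
From mathcomp Require Import all_boot all_algebra.
From mathcomp Require Import reals complex.
Set Implicit Arguments.
Unset Strict Implicit.
Unset Printing Implicit Defensive.
Import GRing.Theory Num.Theory.
Local Open Scope ring_scope.

(* A representation of U_q(sl_3) (Jimbo presentation) on a C-vector space V:
   linear operators E1 E2 F1 F2 K1 K2 K1i K2i (Ki = K_i^{-1}) satisfying
   the defining relations, with Cartan matrix [[2,-1],[-1,2]]. *)
Record Uq_sl3_rep (R : realType) (q : R[i]) (V : lmodType R[i]) := {
  E1 : {linear V -> V}; E2 : {linear V -> V};
  F1 : {linear V -> V}; F2 : {linear V -> V};
  K1 : {linear V -> V}; K2 : {linear V -> V};
  K1i : {linear V -> V}; K2i : {linear V -> V};
  rK12 : forall x, K1 (K2 x) = K2 (K1 x);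
  rK1K1i : forall x, K1 (K1i x) = x; rK1iK1 : forall x, K1i (K1 x) = x;
  rK2K2i : forall x, K2 (K2i x) = x; rK2iK2 : forall x, K2i (K2 x) = x;
  (* K_i E_j K_i^{-1} = q^{a_ij} E_j *)
  rK1E1 : forall x, K1 (E1 (K1i x)) = q ^+ 2 *: E1 x;
  rK1E2 : forall x, K1 (E2 (K1i x)) = q^-1 *: E2 x;
  rK2E1 : forall x, K2 (E1 (K2i x)) = q^-1 *: E1 x;
  rK2E2 : forall x, K2 (E2 (K2i x)) = q ^+ 2 *: E2 x;
  (* K_i F_j K_i^{-1} = q^{-a_ij} F_j *)
  rK1F1 : forall x, K1 (F1 (K1i x)) = q ^- 2 *: F1 x;
  rK1F2 : forall x, K1 (F2 (K1i x)) = q *: F2 x;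
  rK2F1 : forall x, K2 (F1 (K2i x)) = q *: F1 x;
  rK2F2 : forall x, K2 (F2 (K2i x)) = q ^- 2 *: F2 x;
  rEF11 : forall x, E1 (F1 x) - F1 (E1 x) = (q - q^-1)^-1 *: (K1 x - K1i x);
  rEF22 : forall x, E2 (F2 x) - F2 (E2 x) = (q - q^-1)^-1 *: (K2 x - K2i x);
  rEF12 : forall x, E1 (F2 x) = F2 (E1 x);
  rEF21 : forall x, E2 (F1 x) = F1 (E2 x);
  rSE12 : forall x, E1 (E1 (E2 x)) - (q + q^-1) *: E1 (E2 (E1 x)) + E2 (E1 (E1 x)) = 0;
  rSE21 : forall x, E2 (E2 (E1 x)) - (q + q^-1) *: E2 (E1 (E2 x)) + E1 (E2 (E2 x)) = 0;
  rSF12 : forall x, F1 (F1 (F2 x)) - (q + q^-1) *: F1 (F2 (F1 x)) + F2 (F1 (F1 x)) = 0;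
  rSF21 : forall x, F2 (F2 (F1 x)) - (q + q^-1) *: F2 (F1 (F2 x)) + F1 (F2 (F2 x)) = 0
}.

Section Ops.
Variables (R : realType) (q : R[i]) (V : lmodType R[i]) (M : Uq_sl3_rep q V).

Definition opz (f fi : V -> V) (l : int) : V -> V :=
  match l with Posz m => iter m f | Negz m => iter m.+1 fi end.

Definition F3op (x : V) : V := F1 M (F2 M x) - q *: F2 M (F1 M x).
Definition Kop (x : V) : V := K1 M (K2 M (K2 M x)).
Definition Kiop (x : V) : V := K1i M (K2i M (K2i M x)).
Definition C1op (x : V) : V :=
  F1 M (E1 M x) + ((q - q^-1) ^+ 2)^-1 *: (q *: K1 M x + q^-1 *: K1i M x).
(* Q = sum_t c_t K^{a_t} C_1^{b_t}, an arbitrary element of C[K^{+-1}, C_1],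
   encoded by the finite list of its terms (c_t, a_t, b_t). *)
Definition Qop (s : seq (R[i] * int * nat)) (x : V) : V :=
  \sum_(t <- s) t.1.1 *: opz Kop Kiop t.1.2 (iter t.2 C1op x).

Definition gop (alpha : R[i]) (x : V) : V :=
  F2 M (x - q ^- 2 *: K2 M (K2 M (Kiop (Kiop x))))
  + (alpha * (1 - q ^- 2)) *: F3op (Kiop x).
End Ops.

Definition qint (R : realType) (q : R[i]) (k : nat) : R[i] :=
  (q ^+ k - q ^- k) / (q - q^-1).
Definition qfact (R : realType) (q : R[i]) (k : nat) : R[i] :=
  \prod_(1 <= i < k.+1) qint q i.
Definition qbinom (R : realType) (q : R[i]) (n k : nat) : R[i] :=
  if (k <= n)%N then qfact q n / (qfact q k * qfact q (n - k)) else 0.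

(* a_{kj}(n); the exponent k(2n+2j+k-7)/2 is always an integer
   (k(k-7) is even), computed with exact integer division. *)
Definition acoef (R : realType) (q alpha : R[i]) (n k j : nat) : R[i] :=
  (-1) ^+ j * alpha ^+ k * (q ^+ 2 - 1) ^+ k
  * q ^ (j%:Z * (n%:Z - 3))
  * q ^ ((k%:Z * (2 * n%:Z + 2 * j%:Z + k%:Z - 7)) %/ 2)%Z
  * qbinom q n k * qbinom q (n - k) j.

Definition uvec (R : realType) (q alpha : R[i]) (V : lmodType R[i])
  (M : Uq_sl3_rep q V) (v : V) (n : nat) (l : int) (s : seq (R[i] * int * nat)) : V :=
  q ^ (2 * n%:Z * l) *: opz (K2 M) (K2i M) l
    (\sum_(k < n.+1) \sum_(j < (n - k).+1)
        acoef q alpha n k j *: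
          iter (n - k) (F2 M) (iter k (F3op M) (iter (2 * j) (K2 M)
            (opz (Kop M) (Kiop M) (- (2 * j%:Z + k%:Z)) (Qop M s v))))).

(* Main.v *)
Require Import Defs.
From HB Require Import structures.
From mathcomp Require Import all_boot all_algebra.
From mathcomp Require Import reals complex.
From mathcomp Require Import ring zify.
Import GRing.Theory Num.Theory.
Local Open Scope ring_scope.
Set Implicit Arguments.
Unset Strict Implicit.

Section Comm.
Variables (R : realType) (q : R[i]) (V : lmodType R[i]) (M : Uq_sl3_rep q V).
Hypothesis hq0 : q != 0.

Local Notation F1 := (F1 M). Local Notation F2 := (F2 M).
Local Notation K1 := (K1 M). Local Notation K2 := (K2 M).
Local Notation K1i := (K1i M). Local Notation K2i := (K2i M).
Local Notation F3 := (F3op M). Local Notation Ki := (Kiop M).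

Lemma K2F2 x : K2 (F2 x) = q ^- 2 *: F2 (K2 x).
Proof. by rewrite -(rK2F2 M (K2 x)) rK2iK2. Qed.
Lemma K2F1 x : K2 (F1 x) = q *: F1 (K2 x).
Proof. by rewrite -(rK2F1 M (K2 x)) rK2iK2. Qed.

Lemma inv_of (f fi : V -> V) (a : R[i]) g (hf : forall x, fi (f x) = x)
  (hfi : forall x, f (fi x) = x) (lin : forall c x, fi (c *: x) = c *: fi x)
  (hc : a != 0) :
  (forall x, f (g x) = a *: g (f x)) -> forall x, fi (g x) = a^-1 *: g (fi x).
Proof.
move=> h x.
have -> : g x = a^-1 *: f (g (fi x)) by rewrite h hfi scalerA mulVf // scale1r.
by rewrite lin hf.
Qed.

Lemma K1F2 x : K1 (F2 x) = q *: F2 (K1 x).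
Proof. by rewrite -(rK1F2 M (K1 x)) rK1iK1. Qed.
Lemma K1F1 x : K1 (F1 x) = q ^- 2 *: F1 (K1 x).
Proof. by rewrite -(rK1F1 M (K1 x)) rK1iK1. Qed.

Lemma qe2 : q ^- 2 != 0. Proof. by rewrite invr_eq0 expf_neq0. Qed.

Lemma linearZZ (f : {linear V -> V}) c y : f (c *: y) = c *: f y.
Proof. by rewrite linearZ. Qed.

Lemma K1iF2 : forall x, K1i (F2 x) = q^-1 *: F2 (K1i x).
Proof. apply: (@inv_of K1 K1i q F2 (rK1iK1 M) (rK1K1i M) (linearZZ _)) => //; exact: K1F2. Qed.
Lemma K1iF1 : forall x, K1i (F1 x) = q ^+ 2 *: F1 (K1i x).
Proof. rewrite -[q ^+ 2]invrK. apply: (@inv_of K1 K1i _ F1 (rK1iK1 M) (rK1K1i M) (linearZZ _)) => //.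
  exact: qe2. exact: K1F1. Qed.
Lemma K2iF2 : forall x, K2i (F2 x) = q ^+ 2 *: F2 (K2i x).
Proof. rewrite -[q ^+ 2]invrK. apply: (@inv_of K2 K2i _ F2 (rK2iK2 M) (rK2K2i M) (linearZZ _)) => //.
  exact: qe2. exact: K2F2. Qed.
Lemma K2iF1 : forall x, K2i (F1 x) = q^-1 *: F1 (K2i x).
Proof. apply: (@inv_of K2 K2i _ F1 (rK2iK2 M) (rK2K2i M) (linearZZ _)) => //; exact: K2F1. Qed.

Lemma K2K1i x : K2 (K1i x) = K1i (K2 x).
Proof. by rewrite -{1}[K2 (K1i x)](rK1iK1 M) rK12 rK1K1i. Qed.
Lemma K2Ki x : K2 (Ki x) = Ki (K2 x).
Proof. by rewrite /Kiop K2K1i !rK2K2i !rK2iK2. Qed.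

Lemma KiD x y : Ki (x + y) = Ki x + Ki y.
Proof. by rewrite /Kiop !linearD. Qed.
Lemma KiZ a x : Ki (a *: x) = a *: Ki x.
Proof. by rewrite /Kiop !linearZ. Qed.
Lemma KiB x y : Ki (x - y) = Ki x - Ki y.
Proof. by rewrite /Kiop !linearB. Qed.

Lemma F3D x y : F3 (x + y) = F3 x + F3 y.
Proof. by rewrite /F3op !linearD /= addrACA. Qed.
Lemma F3Z a x : F3 (a *: x) = a *: F3 x.
Proof. rewrite /F3op (linearZZ F2) (linearZZ F1) (linearZZ F1) (linearZZ F2). by rewrite scalerBr !scalerA mulrC. Qed.
Lemma F3B x y : F3 (x - y) = F3 x - F3 y.
Proof. by rewrite -scaleN1r F3D F3Z scaleN1r. Qed.

Lemma KiF2 x : Ki (F2 x) = q ^+ 3 *: F2 (Ki x).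
Proof. rewrite /Kiop K2iF2 (linearZZ K2i) K2iF2 (linearZZ K1i) (linearZZ K1i) K1iF2 !scalerA.
  congr (_ *: _). rewrite !exprS expr0. field. exact: hq0. Qed.
Lemma LF3 (L : {linear V -> V}) a b :
  (forall x, L (F1 x) = a *: F1 (L x)) -> (forall x, L (F2 x) = b *: F2 (L x)) ->
  forall x, L (F3 x) = (a * b) *: F3 (L x).
Proof.
move=> h1 h2 x. rewrite /F3op linearB (linearZZ L) h1 h2 (linearZZ F1) h2 h1 (linearZZ F2).
rewrite scalerBr !scalerA. have -> : q * b * a = a * b * q by ring. by [].
Qed.
Lemma K1iF3 x : K1i (F3 x) = q *: F3 (K1i x).
Proof. rewrite (@LF3 K1i _ _ K1iF1 K1iF2). congr (_ *: _). rewrite expr2 -mulrA mulfV ?mulr1 //. Qed.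
Lemma K2iF3 x : K2i (F3 x) = q *: F3 (K2i x).
Proof. rewrite (@LF3 K2i _ _ K2iF1 K2iF2). congr (_ *: _). rewrite expr2 mulrA mulVf ?mul1r //. Qed.
Lemma K2F3 x : K2 (F3 x) = q^-1 *: F3 (K2 x).
Proof. rewrite (@LF3 K2 _ _ K2F1 K2F2). congr (_ *: _). rewrite expr2 invfM mulrA mulfV ?mul1r //. Qed.
Lemma KiF3 x : Ki (F3 x) = q ^+ 3 *: F3 (Ki x).
Proof. rewrite /Kiop K2iF3 (linearZZ K2i) K2iF3 (linearZZ K1i) (linearZZ K1i) K1iF3 !scalerA.
  by rewrite !exprS expr0 mulr1 mulrA. Qed.
Lemma F3F2 x : F3 (F2 x) = q^-1 *: F2 (F3 x).
Proof.
have S := rSF21 M x.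
rewrite /F3op linearB (linearZZ F2) scalerBr scalerA mulVf // scale1r.
have -> : F1 (F2 (F2 x)) = (q + q^-1) *: F2 (F1 (F2 x)) - F2 (F2 (F1 x)).
  apply/eqP; rewrite -subr_eq0 -S; apply/eqP.
  by rewrite opprB addrC.
by rewrite scalerDl addrAC [_ + _ - q *: _]addrAC addrN add0r.
Qed.

Definition X x := K2 (K2 (Ki (Ki x))).
Lemma XD x y : X (x + y) = X x + X y.
Proof. by rewrite /X !KiD !linearD. Qed.
Lemma XZ a x : X (a *: x) = a *: X x.
Proof. by rewrite /X !KiZ (linearZZ K2) (linearZZ K2). Qed.
Lemma XB x y : X (x - y) = X x - X y.
Proof. by rewrite /X !KiB !linearB. Qed.
Lemma XF2 x : X (F2 x) = q ^+ 2 *: F2 (X x).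
Proof. rewrite /X KiF2 KiZ KiF2 !(linearZZ K2) K2F2 (linearZZ K2) K2F2 !scalerA.
  congr (_ *: _). rewrite !exprS expr0. field. exact: hq0. Qed.
Lemma XF3 x : X (F3 x) = q ^+ 4 *: F3 (X x).
Proof. rewrite /X KiF3 KiZ KiF3 !(linearZZ K2) K2F3 (linearZZ K2) K2F3 !scalerA.
  congr (_ *: _). rewrite !exprS expr0. field. exact: hq0. Qed.
Lemma XKi x : X (Ki x) = Ki (X x).
Proof. by rewrite /X !K2Ki. Qed.

Section Iter.
Variable (F : V -> V).
Hypothesis FZ : forall a x, F (a *: x) = a *: F x.
Hypothesis FD : forall x y, F (x + y) = F x + F y.
Lemma iterZ n a x : iter n F (a *: x) = a *: iter n F x.
Proof. by elim: n => //= n ->; rewrite FZ. Qed.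
Lemma iterD n x y : iter n F (x + y) = iter n F x + iter n F y.
Proof. by elim: n => //= n ->; rewrite FD. Qed.
Lemma iterB n x y : iter n F (x - y) = iter n F x - iter n F y.
Proof. by rewrite -scaleN1r iterD iterZ scaleN1r. Qed.
Lemma iter_sum n I (r : seq I) (P : pred I) (E : I -> V) :
  iter n F (\sum_(i <- r | P i) E i) = \sum_(i <- r | P i) iter n F (E i).
Proof.
apply: (big_morph (iter n F) (iterD n)).
by have := iterZ n 0 0; rewrite !scale0r.
Qed.
Lemma iter_comm (L : V -> V) c (LZ : forall a x, L (a *: x) = a *: L x)
  (h : forall x, L (F x) = c *: F (L x)) n x :
  L (iter n F x) = c ^+ n *: iter n F (L x).
Proof. elim: n => [|n IH] /=; first by rewrite scale1r. by rewrite h IH FZ scalerA exprS. Qed.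
End Iter.

Lemma F2Z a x : F2 (a *: x) = a *: F2 x. Proof. exact: linearZZ. Qed.
Lemma F2D x y : F2 (x + y) = F2 x + F2 y. Proof. exact: linearD. Qed.

Lemma X_FF a b Z : X (iter a F2 (iter b F3 Z)) =
  ((q ^+ 2) ^+ a * (q ^+ 4) ^+ b) *: iter a F2 (iter b F3 (X Z)).
Proof. by rewrite (iter_comm F2Z XZ XF2) (iter_comm F3Z XZ XF3) (iterZ F2Z) scalerA. Qed.
Lemma Ki_FF a b Z : Ki (iter a F2 (iter b F3 Z)) =
  ((q ^+ 3) ^+ a * (q ^+ 3) ^+ b) *: iter a F2 (iter b F3 (Ki Z)).
Proof. by rewrite (iter_comm F2Z KiZ KiF2) (iter_comm F3Z KiZ KiF3) (iterZ F2Z) scalerA. Qed.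
Lemma F3_F2 a y : F3 (iter a F2 y) = (q^-1) ^+ a *: iter a F2 (F3 y).
Proof. exact: (iter_comm F2Z F3Z F3F2). Qed.

Lemma g_FF alpha a b Z : gop M alpha (iter a F2 (iter b F3 Z)) =
  iter a.+1 F2 (iter b F3 (Z - (q ^- 2 * ((q ^+ 2) ^+ a * (q ^+ 4) ^+ b)) *: X Z))
  + (alpha * (1 - q ^- 2) * ((q ^+ 3) ^+ a * (q ^+ 3) ^+ b) * (q^-1) ^+ a)
     *: iter a F2 (iter b.+1 F3 (Ki Z)).
Proof.
rewrite /gop -/(X _) X_FF Ki_FF F3Z F3_F2 !scalerA.
congr (_ + _). by rewrite (iterB F3Z F3D) (iterZ F3Z) /= (iterB F2Z F2D) (iterZ F2Z).
Qed.
Lemma STOP : True. Proof. by []. Qed.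
End Comm.

Section Scal.
Variables (R : realType) (q : R[i]).
Hypothesis hq0 : q != 0.
Hypothesis hq : forall m : nat, (0 < m)%N -> q ^+ m != 1.

Lemma qq1 : q - q^-1 != 0.
Proof.
apply/eqP => h. have : q ^+ 2 == 1.
  rewrite expr2; apply/eqP. move/eqP: h; rewrite subr_eq0 => /eqP h. by rewrite {2}h mulfV.
by rewrite (negbTE (hq (isT : (0 < 2)%N))).
Qed.

Lemma qq2 : q * q - 1 != 0.
Proof. by rewrite subr_eq0 -expr2 hq. Qed.

Lemma qint_neq0 k : (0 < k)%N -> qint q k != 0.
Proof.
move=> hk; rewrite /qint mulf_neq0 ?invr_eq0 ?qq1 //.
rewrite subr_eq0; apply/eqP => h.
have : q ^+ (2 * k) == 1.
  rewrite mulnC exprM expr2 {1}h. by rewrite mulVf ?expf_neq0.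
by rewrite (negbTE (hq _)) // muln_gt0.
Qed.

Lemma qfact_neq0 k : qfact q k != 0.
Proof.
rewrite /qfact big_seq; apply: (big_ind (fun x => x != 0)) => //.
- exact: oner_neq0.
- by move=> x y hx hy; rewrite mulf_neq0.
- move=> i; rewrite mem_index_iota => /andP [hi _]. exact: qint_neq0.
Qed.

Lemma qfactS k : qfact q k.+1 = qfact q k * qint q k.+1.
Proof. by rewrite /qfact big_nat_recr. Qed.

Lemma qbinom_gt n k : (n < k)%N -> qbinom q n k = 0.
Proof. by rewrite /qbinom ltnNge => /negbTE ->. Qed.

Lemma qbinom_nn n : qbinom q n n = 1.
Proof. by rewrite /qbinom leqnn subnn /qfact big_nil mulr1 divff // qfact_neq0. Qed.

Lemma qbinom_n0 n : qbinom q n 0 = 1.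
Proof. by rewrite /qbinom subn0 /qfact big_nil mul1r divff // qfact_neq0. Qed.

(* m = j + d + 1 *)
Lemma qbinom_i j d : qbinom q (j + d + 2) j.+1 * qint q d.+1 = qbinom q (j + d + 1) j.+1 * qint q (j + d + 2).
Proof.
rewrite /qbinom !ifT; try lia.
have -> : (j + d + 2 - j.+1 = d.+1)%N by lia.
have -> : (j + d + 1 - j.+1 = d)%N by lia.
have -> : (j + d + 2 = (j + d).+2)%N by lia.
have -> : (j + d + 1 = (j + d).+1)%N by lia.
rewrite qfactS (qfactS d).
have h1 := qfact_neq0 j.+1. have h2 := qfact_neq0 d. have h3 := qfact_neq0 (j+d).+1.
have h4 := qint_neq0 (isT : (0 < d.+1)%N).
field. by rewrite h1 h2 h4.
Qed.

Lemma qbinom_ii j d : qbinom q (j + d + 1) j * qint q d.+1 = qbinom q (j + d + 1) j.+1 * qint q j.+1.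
Proof.
rewrite /qbinom !ifT; try lia.
have -> : (j + d + 1 - j = d.+1)%N by lia.
have -> : (j + d + 1 - j.+1 = d)%N by lia.
rewrite qfactS (qfactS j).
have h1 := qfact_neq0 j. have h2 := qfact_neq0 d. have h3 := qfact_neq0 (j + d + 1).
have h4 := qint_neq0 (isT : (0 < d.+1)%N). have h5 := qint_neq0 (isT : (0 < j.+1)%N).
field. by rewrite h1 h2 h4 h5.
Qed.

Lemma qpow_neq0 n : q ^+ n != 0. Proof. exact: expf_neq0. Qed.

Lemma pascalA m j : q ^+ m * qbinom q m.+1 j.+1 =
  q ^+ (m + j + 1) * qbinom q m j.+1 + q ^+ j * qbinom q m j.
Proof.
case: (ltngtP j m) => hjm.
- have [d ->] : exists d, m = (j + d + 1)%N by exists (m - j - 1)%N; lia.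
  have h4 := qint_neq0 (isT : (0 < d.+1)%N).
  apply: (mulIf h4). rewrite mulrDl -!mulrA.
  have -> : ((j + d + 1).+1 = j + d + 2)%N by lia.
  rewrite (qbinom_i j d) (qbinom_ii j d).
  rewrite /qint. have hq1 := qq1.
  have -> : (j + d + 1 + j + 1 = j + j + d + 2)%N by lia.
  rewrite !exprD !exprS !expr0.
  have := qpow_neq0 j; have := qpow_neq0 d => hd hj.
  field. by rewrite hq0 qq2 hj hd.
- by rewrite !qbinom_gt ?mulr0 ?addr0 //; lia.
- by rewrite hjm !qbinom_nn qbinom_gt // !mulr1 mulr0 add0r.
Qed.

Lemma pascalB n k : q ^+ k.+1 * qbinom q n.+1 k.+1 =
  qbinom q n k.+1 + q ^+ n.+1 * qbinom q n k.
Proof.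
case: (ltngtP k n) => hkn.
- have [d ->] : exists d, n = (k + d + 1)%N by exists (n - k - 1)%N; lia.
  have h4 := qint_neq0 (isT : (0 < d.+1)%N).
  apply: (mulIf h4). rewrite mulrDl -!mulrA.
  have -> : ((k + d + 1).+1 = k + d + 2)%N by lia.
  rewrite (qbinom_i k d) (qbinom_ii k d).
  rewrite /qint. have hq1 := qq1.
  rewrite !exprD !exprS !expr0.
  have := qpow_neq0 k; have := qpow_neq0 d => hd hk.
  field. by rewrite hq0 qq2 hk hd.
- by rewrite !qbinom_gt ?mulr0 ?addr0 //; lia.
- by rewrite hkn !qbinom_nn qbinom_gt // !mulr1 add0r.
Qed.
End Scal.

Section Coef.
Variables (R : realType) (q : R[i]).
Hypothesis hq0 : q != 0.
Hypothesis hq : forall m : nat, (0 < m)%N -> q ^+ m != 1.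

Definition cc (m : nat) (r : R[i]) (j : nat) : R[i] :=
  (-1) ^+ j * r ^+ j * q ^- j * q ^+ (m * j) * qbinom q m j.

Lemma cc_rec m r j : cc m.+1 r j.+1 = cc m (q ^+ 2 * r) j.+1 - r * cc m (q ^+ 2 * r) j.
Proof.
rewrite /cc.
have hp := pascalA hq0 hq m j.
have -> : qbinom q m.+1 j.+1 = (q ^+ m)^-1 * (q ^+ (m + j + 1) * qbinom q m j.+1 + q ^+ j * qbinom q m j).
  by rewrite -hp mulKf // expf_neq0.
have -> : (m.+1 * j.+1 = m * j + m + j + 1)%N by lia.
have -> : (m * j.+1 = m * j + m)%N by lia.
rewrite !exprMn !exprD !exprS !expr0.
have := expf_neq0 j hq0; have := expf_neq0 m hq0 => hm hj.
field. by rewrite hq0 hm hj.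
Qed.
End Coef.

Section PopS.
Variables (R : realType) (q : R[i]) (V : lmodType R[i]) (M : Uq_sl3_rep q V).
Hypothesis hq0 : q != 0.
Hypothesis hq : forall m : nat, (0 < m)%N -> q ^+ m != 1.
Local Notation X := (X M).

Fixpoint Pop (m : nat) (r : R[i]) (x : V) : V :=
  if m is m'.+1 then Pop m' (q ^+ 2 * r) (x - r *: X x) else x.

Lemma PopD m r x y : Pop m r (x + y) = Pop m r x + Pop m r y.
Proof. elim: m r x y => [//|m IH] r x y /=. rewrite XD scalerDr opprD addrACA. by rewrite (IH (q ^+ 2 * r) (x - r *: X x)). Qed.
Lemma PopZ m r a x : Pop m r (a *: x) = a *: Pop m r x.
Proof. elim: m r x => [//|m IH] r x /=. by rewrite XZ scalerA [r * a]mulrC -scalerA -scalerBr IH. Qed.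
Lemma PopB m r x y : Pop m r (x - y) = Pop m r x - Pop m r y.
Proof. by rewrite -scaleN1r PopD PopZ scaleN1r. Qed.

Lemma XPop m r x : X (Pop m r x) = Pop m r (X x).
Proof. elim: m r x => //= m IH r x. by rewrite IH XB XZ. Qed.
Lemma KiPop m r x : Kiop M (Pop m r x) = Pop m r (Kiop M x).
Proof. elim: m r x => //= m IH r x. by rewrite IH KiB KiZ XKi. Qed.

Lemma Pop_last m r x : Pop m.+1 r x = Pop m r x - (q ^+ (2 * m) * r) *: X (Pop m r x).
Proof.
elim: m r x => [|m IH] r x; first by rewrite /= mul1r.
change (Pop m.+2 r x) with (Pop m.+1 (q ^+ 2 * r) (x - r *: X x)).
change (Pop m.+1 r x) with (Pop m (q ^+ 2 * r) (x - r *: X x)).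
rewrite IH. congr (_ - _ *: _). rewrite mulrA -exprD. congr (_ ^+ _ * _). lia.
Qed.

Lemma iterX_D n x y : iter n X (x + y) = iter n X x + iter n X y. Proof. by elim: n => //= n ->; rewrite XD. Qed.
Lemma iterX_Z n a x : iter n X (a *: x) = a *: iter n X x. Proof. by elim: n => //= n ->; rewrite XZ. Qed.
Lemma iterX_B n x y : iter n X (x - y) = iter n X x - iter n X y. Proof. by rewrite -scaleN1r iterX_D iterX_Z scaleN1r. Qed.

Lemma Pop_exp m r x : Pop m r x = \sum_(0 <= j < m.+1) cc q m r j *: iter j X x.
Proof.
elim: m r x => [|m IH] r x.
  by rewrite big_nat1 /cc /= qbinom_n0 // muln0 !expr0 invr1 !mulr1 scale1r.
rewrite /= IH.
rewrite [in RHS]big_nat_recl // {1}[in RHS]/cc qbinom_n0 // muln0 !expr0 invr1 !mulr1 scale1r /=.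
under [in RHS]eq_bigr => j _ do rewrite cc_rec // scalerBl.
rewrite [in RHS]big_split /= sumrN.
rewrite [in LHS](eq_bigr (fun j => cc q m (q ^+ 2 * r) j *: iter j X x
   - (r * cc q m (q ^+ 2 * r) j) *: iter j.+1 X x)); last first.
  move=> j _. by rewrite iterX_B iterX_Z scalerBr scalerA [cc _ _ _ _ * r]mulrC -iterSr.
rewrite big_split /= sumrN addrA. congr (_ - _).
rewrite big_nat_recl // big_nat_recr //=.
rewrite [cc q m _ m.+1]/cc qbinom_gt // mulr0 scale0r addr0.
by rewrite [cc q m _ 0]/cc qbinom_n0 // muln0 !expr0 invr1 !mulr1 scale1r.
Qed.
End PopS.

Definition Eb (n k : nat) : int := ((k%:Z * (2 * n%:Z + k%:Z - 7)) %/ 2)%Z.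

Lemma Eb_S1 n k : Eb n.+1 k = Eb n k + k%:Z.
Proof.
rewrite /Eb.
have -> : (k%:Z * (2 * n.+1%:Z + k%:Z - 7) = k%:Z * 2 + k%:Z * (2 * n%:Z + k%:Z - 7))%R.
  rewrite -[n.+1]addn1 PoszD. ring.
by rewrite divzMDl // addrC.
Qed.

Lemma Eb_S2 n k : Eb n k.+1 = Eb n k + (n%:Z + k%:Z - 3).
Proof.
rewrite /Eb.
have -> : (k.+1%:Z * (2 * n%:Z + k.+1%:Z - 7) = (n%:Z + k%:Z - 3) * 2 + k%:Z * (2 * n%:Z + k%:Z - 7))%R.
  rewrite -[k.+1]addn1 PoszD. ring.
by rewrite divzMDl // addrC.
Qed.

Lemma Eb0 n : Eb n 0 = 0.
Proof. by rewrite /Eb mul0r. Qed.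

Section Beta.
Variables (R : realType) (q alpha : R[i]).
Hypothesis hq0 : q != 0.
Hypothesis hq : forall m : nat, (0 < m)%N -> q ^+ m != 1.

Definition beta n k := alpha ^+ k * (q ^+ 2 - 1) ^+ k * q ^ (Eb n k) * qbinom q n k.

Lemma qz_nat (a b : nat) : q ^ (a%:Z + b%:Z - 3) = q ^+ a * q ^+ b / q ^+ 3.
Proof. by rewrite !expfzDr // ?expf_neq0 // -!exprnP -exprnN. Qed.

Lemma beta0 n : beta n 0 = 1.
Proof. by rewrite /beta Eb0 qbinom_n0 // !expr0 !mul1r. Qed.

Lemma S1 m k : beta (k + m).+1 k.+1 = beta (k + m) k.+1 +
  beta (k + m) k * (alpha * (1 - q ^- 2) * ((q ^+ 3) ^+ m * (q ^+ 3) ^+ k) * (q^-1) ^+ m).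
Proof.
rewrite /beta Eb_S1 Eb_S2.
have hp := pascalB hq0 hq (k + m) k.
have -> : qbinom q (k + m).+1 k.+1 = (q ^+ k.+1)^-1 * (qbinom q (k + m) k.+1 + q ^+ (k + m).+1 * qbinom q (k + m) k).
  by rewrite -hp mulKf // expf_neq0.
rewrite !expfzDr ?expf_neq0 // -!exprnP -exprnN.
have hG : q ^ Eb (k + m) k != 0 by rewrite expfz_neq0.
rewrite -!exprM !(mulnC 3) !exprM !exprS !exprD !exprVn !expr0.
have := expf_neq0 k hq0; have := expf_neq0 m hq0 => hm hk.
field. by rewrite hq0 hk hm.
Qed.

Lemma S2 m k : beta (k + m.+1).+1 k.+1 * (q ^+ (2 * m) * (q ^- 2 * q ^+ (2 * k.+1))) =
  beta (k + m.+1) k.+1 * (q ^- 2 * ((q ^+ 2) ^+ m * (q ^+ 4) ^+ k.+1)) +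
  beta (k + m.+1) k * (alpha * (1 - q ^- 2) * ((q ^+ 3) ^+ m.+1 * (q ^+ 3) ^+ k) * (q^-1) ^+ m.+1)
   * (q ^- 2 * q ^+ (2 * k)).
Proof.
rewrite /beta Eb_S1 Eb_S2.
have hp := pascalA hq0 hq (k + m.+1) k.
have -> : qbinom q (k + m.+1).+1 k.+1 = (q ^+ (k + m.+1))^-1 *
   (q ^+ (k + m.+1 + k + 1) * qbinom q (k + m.+1) k.+1 + q ^+ k * qbinom q (k + m.+1) k).
  by rewrite -hp mulKf // expf_neq0.
rewrite !expfzDr ?expf_neq0 // -!exprnP -exprnN.
have hG : q ^ Eb (k + m.+1) k != 0 by rewrite expfz_neq0.
rewrite -!exprM !(mulnC 3) !(mulnC 2) !(mulnC 4) !exprM !exprS !exprD !exprVn !expr0.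
have := expf_neq0 k hq0; have := expf_neq0 m hq0 => hm hk.
field. by rewrite hq0 hm hk expf_neq0.
Qed.
End Beta.

Section Main.
Variables (R : realType) (q alpha : R[i]) (V : lmodType R[i]) (M : Uq_sl3_rep q V).
Hypothesis hq0 : q != 0.
Hypothesis hq : forall m : nat, (0 < m)%N -> q ^+ m != 1.
Local Notation F2 := (F2 M). Local Notation F3 := (F3op M).
Local Notation Ki := (Kiop M). Local Notation X := (X M).
Local Notation g := (gop M alpha).
Local Notation Pop := (Pop M).

Lemma comb (W Y : V) b' a b1 b d c : b' = b1 + d -> b' * a = b1 * b + d * c ->
  b' *: (W - a *: Y) = b1 *: (W - b *: Y) + d *: (W - c *: Y).
Proof.
move=> h1 h2. rewrite !scalerBr !scalerA h2 {1}h1 !scalerDl opprD. by rewrite addrACA.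
Qed.

Definition FF a b x := iter a F2 (iter b F3 x).
Lemma FFB a b x y : FF a b (x - y) = FF a b x - FF a b y.
Proof. by rewrite /FF (iterB (@F3Z _ _ _ M) (@F3D _ _ _ M)) (iterB (@F2Z _ _ _ M) (@F2D _ _ _ M)). Qed.
Lemma FFZ a b c x : FF a b (c *: x) = c *: FF a b x.
Proof. by rewrite /FF (iterZ (@F3Z _ _ _ M)) (iterZ (@F2Z _ _ _ M)). Qed.

Lemma gdef x : g x = F2 x - q ^- 2 *: F2 (X x) + (alpha * (1 - q ^- 2)) *: F3 (Ki x).
Proof. by rewrite /gop linearB linearZ. Qed.
Lemma gD x y : g (x + y) = g x + g y.
Proof.
rewrite !gdef linearD XD linearD KiD F3D scalerDr scalerDr opprD.
rewrite -!addrA. congr (_ + _). rewrite addrCA. congr (_ + _). rewrite [RHS]addrCA. congr (_ + _). by rewrite addrCA.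
Qed.
Lemma gZ c x : g (c *: x) = c *: g x.
Proof.
have e1 : F2 (c *: x) = c *: F2 x := linearZZ F2 c x.
have e2 : F2 (X (c *: x)) = c *: F2 (X x) by rewrite XZ linearZZ.
have e3 : F3 (Ki (c *: x)) = c *: F3 (Ki x) by rewrite KiZ F3Z.
rewrite !gdef e1 e2 e3. move: (F2 x) (F2 (X x)) (F3 (Ki x)) => a b d.
rewrite scalerDr scalerBr !scalerA.
by rewrite [q ^- 2 * c]mulrC [alpha * _ * c]mulrC.
Qed.
Lemma g_sum I (rr : seq I) (P : pred I) (E : I -> V) :
  g (\sum_(i <- rr | P i) E i) = \sum_(i <- rr | P i) g (E i).
Proof.
apply: (big_morph g gD). by have := gZ 0 0; rewrite !scale0r.
Qed.

Definition rr k := q ^- 2 * q ^+ (2 * k).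
Lemma rr_S k : q ^+ 2 * rr k = rr k.+1.
Proof. rewrite /rr mulrA [q ^+ 2 * _]mulrC -mulrA -exprD. congr (_ * _ ^+ _). lia. Qed.

Definition Zt n w k := Pop (n - k) (rr k) (iter k Ki w).
Definition s1 a b := q ^- 2 * ((q ^+ 2) ^+ a * (q ^+ 4) ^+ b).
Definition s2 a b := alpha * (1 - q ^- 2) * ((q ^+ 3) ^+ a * (q ^+ 3) ^+ b) * (q^-1) ^+ a.
Definition TT n w k := beta q alpha n k *: FF (n - k) k (Zt n w k).
Definition Aterm n w k := beta q alpha n k *:
  iter (n - k).+1 F2 (iter k F3 (Zt n w k - s1 (n - k) k *: X (Zt n w k))).
Definition Bterm n w k := (beta q alpha n k * s2 (n - k) k) *:
  iter (n - k) F2 (iter k.+1 F3 (Ki (Zt n w k))).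

Lemma sum_shift (A B T : nat -> V) n : T 0%N = A 0%N -> T n.+1 = B n ->
  (forall k, (k < n)%N -> T k.+1 = A k.+1 + B k) ->
  \sum_(0 <= k < n.+1) (A k + B k) = \sum_(0 <= k < n.+2) T k.
Proof.
move=> h0 hn hk.
rewrite big_split /= big_nat_recl // [in RHS]big_nat_recl // [X in _ = _ + X]big_nat_recr //=.
rewrite [X in _ + X = _]big_nat_recr //= h0 hn.
rewrite (@eq_big_nat _ _ _ 0 n (fun k => T k.+1) (fun k => A k.+1 + B k)); last first.
  by move=> k /andP [_ h]; exact: hk.
by rewrite big_split /= !addrA.
Qed.

Lemma T0 n w : TT n.+1 w 0 = Aterm n w 0.
Proof.
rewrite /TT /Aterm /Zt !subn0 !(beta0 alpha hq0 hq) !scale1r /FF Pop_last.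
congr (iter _ F2 (iter _ F3 (_ - _ *: _))).
all: try exact hq0. by rewrite /s1 /rr !muln0 !expr0 !mulr1 exprM mulrC.
Qed.

Lemma Tn n w : TT n.+1 w n.+1 = Bterm n w n.
Proof.
rewrite /TT /Bterm /Zt !subnn /FF /=.
have := S1 alpha hq0 hq 0 n. rewrite !addn0 => ->.
rewrite [beta q alpha n n.+1]/beta qbinom_gt // mulr0 add0r. by [].
Qed.

Lemma Tk n w k : (k < n)%N -> TT n.+1 w k.+1 = Aterm n w k.+1 + Bterm n w k.
Proof.
move=> hk. have [m hm] : exists m, n = (k + m.+1)%N by exists (n - k.+1)%N; lia.
rewrite /TT /Aterm /Bterm /Zt hm.
have -> : ((k + m.+1).+1 - k.+1 = m.+1)%N by lia.
have -> : ((k + m.+1) - k.+1 = m)%N by lia.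
have -> : ((k + m.+1) - k = m.+1)%N by lia.
rewrite (Pop_last _ hq0 m (rr k.+1)) KiPop.
rewrite [Pop m.+1 (rr k) _]/= rr_S PopB PopZ XPop.
change (Ki (iter k Ki w)) with (iter k.+1 Ki w).
set W := Pop m (rr k.+1) (iter k.+1 Ki w).
rewrite -!/(FF _ _ _) !FFB !FFZ.
apply: comb.
- exact: S1.
- exact: S2.
Qed.

Lemma iter_g n w : iter n g w = \sum_(0 <= k < n.+1) TT n w k.
Proof.
elim: n => [|n IH]; first by rewrite big_nat1 /TT (beta0 alpha hq0 hq) scale1r.
rewrite iterS IH g_sum.
transitivity (\sum_(0 <= k < n.+1) (Aterm n w k + Bterm n w k)).
  apply: eq_bigr => k _. by rewrite /TT gZ /FF (g_FF M hq0) scalerDr scalerA.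
apply: sum_shift. exact: T0. exact: Tn. exact: Tk.
Qed.
End Main.

Section Fin.
Variables (R : realType) (q alpha : R[i]) (V : lmodType R[i]) (M : Uq_sl3_rep q V).
Hypothesis hq0 : q != 0.
Hypothesis hq : forall m : nat, (0 < m)%N -> q ^+ m != 1.
Local Notation K2 := (K2 M).
Local Notation Ki := (Kiop M). Local Notation X := (X M).

Lemma iterK2Ki a x : Ki (iter a K2 x) = iter a K2 (Ki x).
Proof. elim: a => //= a <-. by rewrite K2Ki. Qed.

Lemma XK j y : iter j X y = iter (2 * j) K2 (iter (2 * j) Ki y).
Proof.
elim: j => // j IH. rewrite mulnS /= IH /X. by rewrite !iterK2Ki.
Qed.

Lemma opz_neg (f fi : V -> V) m x : opz f fi (- (m%:Z)) x = iter m fi x.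
Proof. by case: m. Qed.

Lemma vec_eq (w : V) k j :
  iter (2 * j) K2 (opz (Kop M) Ki (- (2 * j%:Z + k%:Z)) w) = iter j X (iter k Ki w).
Proof.
have -> : (2 * j%:Z + k%:Z = (2 * j + k)%N%:Z)%R by rewrite PoszD PoszM.
by rewrite opz_neg ssrnat.iterD XK.
Qed.

Lemma coef_eq k m j : acoef q alpha (k + m) k j = beta q alpha (k + m) k * cc q m (rr q k) j.
Proof.
rewrite /acoef /beta /cc /rr /Eb addKn.
have -> : (k%:Z * (2 * (k + m)%:Z + 2 * j%:Z + k%:Z - 7) =
   (j * k)%N%:Z * 2 + k%:Z * (2 * (k + m)%:Z + k%:Z - 7))%R.
  rewrite !PoszD !PoszM. ring.
rewrite divzMDl // expfzDr // -exprnP.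
have -> : (j%:Z * ((k + m)%:Z - 3) = (j * k)%N%:Z + (j * m)%N%:Z - (3 * j)%N%:Z)%R.
  rewrite !PoszD !PoszM. ring.
rewrite !expfzDr ?expf_neq0 // -!exprnP -exprnN.
have -> : q ^+ (3 * j) = (q ^+ j) ^+ 3 by rewrite -exprM mulnC.
have -> : (m * j = j * m)%N by rewrite mulnC.
rewrite exprMn exprVn -!exprM.
have -> : (2 * k * j = (j * k) * 2)%N by lia.
have -> : (2 * j = j * 2)%N by lia.
rewrite !exprM.
have := expf_neq0 j hq0; have := expf_neq0 (j * k) hq0; have := expf_neq0 (j * m) hq0.
move=> h1 h2 h3.
field. by rewrite h3.
Qed.
End Fin.

Unset Implicit Arguments.
Set Strict Implicit.

Theorem corollary5p9 (R : realType) (q alpha : R[i])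
  (hq0 : q != 0) (hq : forall m : nat, (0 < m)%N -> q ^+ m != 1)
  (halpha : alpha != 0)
  (V : lmodType R[i]) (M : Uq_sl3_rep q V) (v : V)
  (hE1 : E1 M v = alpha *: v) (hE2 : E2 M v = 0)
  (n : nat) (l : int) (s : seq (R[i] * int * nat)) :
  @uvec R q alpha V M v n l s =
  q ^ (2 * n%:Z * l) *: opz (K2 M) (K2i M) l (iter n (gop M alpha) (Qop M s v)).
Proof.
rewrite /uvec. congr (_ *: opz _ _ _ _).
set w := Qop M s v.
rewrite (iter_g alpha M hq0 hq) big_mkord.
apply: eq_bigr => [[k hk]] _ /=.
have [m hm] : exists m, n = (k + m)%N by exists (n - k)%N; lia.
rewrite /TT /FF /Zt (Pop_exp M hq0 hq) hm addKn.
rewrite (iter_sum (@F3Z _ _ _ M) (@F3D _ _ _ M)) (iter_sum (@F2Z _ _ _ M) (@F2D _ _ _ M)).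
rewrite scaler_sumr big_mkord. apply: eq_bigr => j _.
rewrite vec_eq (iterZ (@F3Z _ _ _ M)) (iterZ (@F2Z _ _ _ M)) scalerA.
by rewrite (coef_eq alpha hq0).
Qed.
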